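(* Let $M\ge 2$ be even, $T\ge1$, $\mathcal{X}=\{\pm1,\pm3,\ldots,\pm(M-1)\}\subset\mathbb{R}$ and $\mathcal{C}=\mathcal{X}^T$. Let $\mathbf{y}\in\mathbb{C}^T$, $\mathbf{y}\neq\mathbf 0$. Let $\mathbf{x}^{\mathrm{opt}}$ be any maximizer of $|\hat{\mathbf{x}}^\dagger\mathbf{y}|^2/\|\hat{\mathbf{x}}\|^2$ over $\hat{\mathbf{x}}\in\mathcal{C}$, let $h^{\mathrm{opt}}=(\mathbf{x}^{\mathrm{opt}})^\dagger\mathbf{y}/\|\mathbf{x}^{\mathrm{opt}}\|^2$ and $\lambda^{\mathrm{opt}}=1/h^{\mathrm{opt}}$. Then $|\mathrm{Re}(\lambda^{\mathrm{opt}}y_t)|\le M+T-2$ for all $t=1,\ldots,T$.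
   Context: $(\cdot)^\dagger$ is the Hermitian transpose and $\|\cdot\|$ the Euclidean norm. This is noncoherent GLRT detection of real $M$-ary PAM codewords of length $T$ transmitted over a complex-valued block fading channel $\mathbf{y}=h\mathbf{x}+\mathbf{n}$; since $\mathbf{y}\neq\mathbf 0$ the maximum is positive so $h^{\mathrm{opt}}\ne0$. *)

(* Defs.v *)
(* Complex numbers: an arbitrary numClosedFieldType C
   (e.g. algC). *)
From HB Require Import structures.
From mathcomp Require Import all_boot all_order all_algebra.
Set Implicit Arguments. Unset Strict Implicit. Unset Printing Implicit Defensive.
Import Order.TTheory GRing.Theory Num.Theory.
Local Open Scope ring_scope.

Definition pam_symbol (C : numClosedFieldType) (M : nat) (a : C) : Prop :=
  exists k : nat, (2 * k + 1 <= M - 1)%N /\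
    (a = (2 * k + 1)%:R \/ a = - (2 * k + 1)%:R).

Definition codeword (C : numClosedFieldType) (M T : nat) (x : 'I_T -> C) : Prop :=
  forall t, pam_symbol M (x t).

Definition herm_ip (C : numClosedFieldType) (T : nat) (x y : 'I_T -> C) : C :=
  \sum_(t < T) (x t)^* * y t.

Definition sqnorm (C : numClosedFieldType) (T : nat) (x : 'I_T -> C) : C :=
  \sum_(t < T) `|x t| ^+ 2.

Definition glrt_metric (C : numClosedFieldType) (T : nat) (x y : 'I_T -> C) : C :=
  `|herm_ip x y| ^+ 2 / sqnorm x.

(* Main.v *)
Require Import Defs.
From HB Require Import structures.
From mathcomp Require Import all_boot all_order all_algebra.
From Stdlib Require Import Lia.
Import Order.TTheory GRing.Theory Num.Theory.
Local Open Scope ring_scope.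

Set Implicit Arguments. Unset Strict Implicit.
Ltac nlia := try apply/ssrnat.leP;
  repeat match goal with H : is_true (leq _ _) |- _ => move/ssrnat.leP: H
   | H : @eq nat _ _ |- _ => move: H end;
  rewrite -?plusE -?multE -?minusE; lia.

Section S.
Variable C : numClosedFieldType.

Lemma pam_form (M : nat) (a : C) : pam_symbol M a ->
  exists n : nat, (1 <= n <= M - 1)%N /\ (a = n%:R \/ a = - n%:R).
Proof. by case=> k [hk ha]; exists (2*k+1)%N; split=> //; rewrite hk addn1. Qed.

Lemma pam_real (M : nat) (a : C) : pam_symbol M a -> a \is Num.real.
Proof. by case/pam_form=> n [_ [->|->]]; rewrite ?rpredN realn. Qed.

Lemma pam_conj (M : nat) (a : C) : pam_symbol M a -> a^* = a.
Proof. by move/pam_real/conj_Creal. Qed.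

Lemma pam_sq (M : nat) (a : C) : pam_symbol M a -> 1 <= a ^+ 2.
Proof.
case/pam_form=> n [/andP[h1 _] [->|->]]; rewrite ?sqrrN -natrX ler1n;
by rewrite expn_gt0 h1.
Qed.

Lemma pam_neg (M : nat) (a : C) : pam_symbol M a -> pam_symbol M (- a).
Proof. by case=> k [hk [->|->]]; exists k; split=> //; rewrite ?opprK; [right|left]. Qed.

Lemma sqnorm_cw (M T : nat) (x : 'I_T -> C) : codeword M x ->
  sqnorm x = \sum_(t < T) x t ^+ 2.
Proof. by move=> hx; apply: eq_bigr=> t _; exact: real_normK (pam_real (hx t)). Qed.

Lemma sqnorm_gt0 (M T : nat) (x : 'I_T -> C) : (1 <= T)%N -> codeword M x ->
  0 < sqnorm x.
Proof.
move=> hT hx; rewrite (sqnorm_cw hx).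
apply: (@lt_le_trans _ _ (\sum_(t < T) (1 : C))).
  by rewrite sumr_const card_ord ltr0n.
by apply: ler_sum=> t _; apply: pam_sq (hx t).
Qed.

Lemma herm_cw (M T : nat) (x y : 'I_T -> C) : codeword M x ->
  herm_ip x y = \sum_(t < T) x t * y t.
Proof. by move=> hx; apply: eq_bigr=> t _; rewrite (pam_conj (hx t)). Qed.

Lemma alg (N d r x : C) : 0 < N -> d ^+ 2 = 4%:R -> 0 <= (d * r) ^+ 2 ->
  (N + d * r) ^+ 2 <= N * (N + ((x + d) ^+ 2 - x ^+ 2)) -> d * (r - x) <= 2%:R.
Proof.
move=> hN hd hdr.
have -> : (x + d) ^+ 2 - x ^+ 2 = x * d *+ 2 + 4%:R.
  by rewrite sqrrD hd addrAC (addrAC (x^+2)) subrr add0r.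
rewrite sqrrD mulrDr -expr2 -addrA lerD2l => h.
have h2 : N * (d * r) *+ 2 <= N * (x * d *+ 2 + 4%:R).
  apply: le_trans h; by rewrite lerDl.
have h3 : N * (d * (r - x) *+ 2) <= N * (2%:R *+ 2).
  rewrite mulrBr mulrnBl mulrBr lerBlDr -mulr_natr -natrM mulrnAr (mulrC d x).
  rewrite mulrnAr; apply: le_trans h2 _; rewrite mulrDr addrC mulr1 mulr_natr.
  by [].
by move: h3; rewrite ler_pM2l // ler_pMn2r.
Qed.


Definition HB (M T : nat) (x r : 'I_T -> C) := forall s (d : C),
  (d = 2%:R \/ d = - 2%:R) -> pam_symbol M (x s + d) -> d * (r s - x s) <= 2%:R.

Lemma HB_neg M T (x r : 'I_T -> C) : HB M x r -> HB M (fun s => - x s) (fun s => - r s).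
Proof.
move=> h s d hd hp.
have -> : d * (- r s - - x s) = (- d) * (r s - x s) by rewrite -opprD mulrN mulNr.
apply: h; first by case: hd=> ->; rewrite ?opprK; [right|left].
by move: (pam_neg hp); rewrite opprD opprK.
Qed.

Lemma two_eq : (2%:R : C) = 1 + 1. Proof. exact: mulr2n. Qed.

Lemma lowpos M T (x r : 'I_T -> C) s k : HB M x r -> (2*k+1 <= M-1)%N ->
  x s = (2*k+1)%:R -> -1 <= r s - x s.
Proof.
move=> h hk hx.
have hp : pam_symbol M (x s + - 2%:R).
  case: k hk hx => [|k] hk hx.
    exists 0%N; split=> //; right; rewrite hx muln0 add0n two_eq opprD addNKr.
    done.
  exists k; split; first by move: hk => /ssrnat.leP hk; apply/ssrnat.leP; move: hk; nlia.
  left; rewrite hx; have -> : (2 * k.+1 + 1 = (2*k+1) + 2)%N by nlia.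
  by rewrite natrD addrK.
have := h s _ (or_intror erefl) hp.
rewrite mulNr lerNl => h2.
by rewrite -(ler_pM2l (x := 2%:R)) ?ltr0n // mulrN1.
Qed.

Lemma highpos M T (x r : 'I_T -> C) s k : HB M x r -> (2*k+3 <= M-1)%N ->
  x s = (2*k+1)%:R -> r s - x s <= 1.
Proof.
move=> h hk hx.
have hp : pam_symbol M (x s + 2%:R).
  exists k.+1; split; first by move: hk => /ssrnat.leP hk; apply/ssrnat.leP; move: hk; nlia.
  left; have -> : (2 * k.+1 + 1 = (2*k+1) + 2)%N by nlia.
  by rewrite hx -natrD.
have := h s _ (or_introl erefl) hp.
by rewrite -{2}(mulr1 2%:R) ler_pM2l ?ltr0n.
Qed.

Lemma lowall M T (x r : 'I_T -> C) s : HB M x r -> codeword M x ->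
  - (M - 1)%:R <= x s * (r s - x s).
Proof.
have gen : forall (x r : 'I_T -> C), HB M x r -> forall k, (2*k+1 <= M-1)%N ->
    x s = (2*k+1)%:R -> - (M - 1)%:R <= x s * (r s - x s).
  move=> x' r' h k hk hx.
  have l := lowpos h hk hx.
  apply: le_trans (_ : x' s * (-1) <= _); last first.
    by rewrite ler_wpM2l // hx ler0n.
  by rewrite mulrN1 lerN2 hx ler_nat.
move=> h hx; case: (hx s) => k [hk [e|e]]; first exact: gen h k hk e.
have := gen _ _ (HB_neg h) k hk; rewrite e opprK => /(_ erefl).
by rewrite -opprD mulrN mulNr.
Qed.


Lemma parity k M : (2*k+1 <= M-1)%N -> ~~ (2*k+3 <= M-1)%N -> ~~ odd M ->
  (2 <= M)%N -> (2*k+1 = M-1)%N.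
Proof.
move=> h1 h2 h3 h4. have E : (M = (M./2).*2 + odd M)%N by rewrite addnC odd_double_half.
rewrite (negbTE h3) addn0 -mul2n in E.
have h2' : ~ (2*k+3 <= M-1)%coq_nat by move=> /ssrnat.leP; apply/negP.
move: h1 => /ssrnat.leP h1.
move: E h1 h2'; nlia.
Qed.

Lemma key_pos M T (x r : 'I_T -> C) t k : (2 <= M)%N -> ~~ odd M -> (1 <= T)%N ->
  codeword M x -> HB M x r -> \sum_s x s * (r s - x s) = 0 ->
  (2*k+1 <= M-1)%N -> x t = (2*k+1)%:R -> `|r t| <= (M + T - 2)%:R.
Proof.
move=> hM hMe hT hx h hA hk hxt.
have l := lowpos h hk hxt.
have r0 : 0 <= r t.
  have : ((2*k+1)%:R : C) + -1 <= x t + (r t - x t) by rewrite -hxt lerD2l.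
  rewrite subrKC addn1 -natr1 addrK; apply: le_trans; exact: ler0n.
rewrite ger0_norm //.
case: (boolP (2*k+3 <= M-1)%N) => h3.
  have hh := highpos h h3 hxt.
  have : r t <= (2*k+1)%:R + 1.
    by move: hh; rewrite -(lerD2l (x t)) subrKC hxt.
  move/le_trans; apply; rewrite natr1 ler_nat.
  by nlia.
have E := parity hk h3 hMe hM.
rewrite E in hxt.
set c : C := (M - 1)%:R.
have hS : x t * (r t - x t) <= c * (T - 1)%:R.
  have := hA; rewrite (bigD1 t) //= => /eqP; rewrite addr_eq0 => /eqP ->.
  rewrite -sumrN.
  apply: (@le_trans _ _ (\sum_(s < T | s != t) c)).
    by apply: ler_sum => s _; rewrite lerNl; apply: lowall.
  have E2 : \sum_(s < T) c = c + \sum_(s < T | s != t) c by rewrite (bigD1 t).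
  rewrite sumr_const card_ord in E2.
  have -> : \sum_(s < T | s != t) c = c *+ T - c by rewrite E2 addrAC subrr add0r.
  by rewrite natrB // mulrBr mulr1 mulr_natr.
have cpos : 0 < c by rewrite ltr0n; nlia.
rewrite hxt -/c ler_pM2l // in hS.
have : r t <= c + (T - 1)%:R.
  by move: hS; rewrite -(lerD2l c) subrKC.
move/le_trans; apply; rewrite /c -natrD ler_nat.
by nlia.
Qed.


Lemma key M T (x r : 'I_T -> C) t : (2 <= M)%N -> ~~ odd M -> (1 <= T)%N ->
  codeword M x -> HB M x r -> \sum_s x s * (r s - x s) = 0 ->
  `|r t| <= (M + T - 2)%:R.
Proof.
move=> hM hMe hT hx h hA.
case: (hx t) => k [hk [e|e]]; first exact: key_pos hM hMe hT hx h hA hk e.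
rewrite -normrN.
apply: (key_pos (x := fun s => - x s) hM hMe hT _ (HB_neg h) _ hk).
- by move=> s; apply: pam_neg.
- rewrite -[RHS]hA; apply: eq_bigr => s _; by rewrite -opprD mulrNN.
- by rewrite e opprK.
Qed.

End S.

Unset Implicit Arguments.
Theorem mainTheorem4 (C : numClosedFieldType) (M T : nat)
  (hM : (2 <= M)%N) (hMeven : ~~ odd M) (hT : (1 <= T)%N)
  (y : 'I_T -> C) (hy : exists t, y t != 0)
  (xopt : 'I_T -> C) (hxopt : codeword M xopt)
  (hmax : forall x : 'I_T -> C, codeword M x -> glrt_metric x y <= glrt_metric xopt y) :
  let hopt := herm_ip xopt y / sqnorm xopt in
  let lambda := hopt^-1 in
  forall t : 'I_T, `|'Re (lambda * y t)| <= (M + T - 2)%:R.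
Proof.
move=> hopt lambda t.
set N := sqnorm xopt. set a := herm_ip xopt y.
have hN : 0 < N := sqnorm_gt0 hT hxopt.
have [a0|a0] := eqVneq a 0.
  by rewrite /lambda /hopt -/a a0 mul0r invr0 mul0r raddf0 normr0 ler0n.
have hlam : lambda = N / a by rewrite /lambda /hopt invf_div.
pose r := fun s => 'Re (lambda * y s).
have hRe : forall x', codeword M x' -> 'Re (lambda * herm_ip x' y) = \sum_s x' s * r s.
  move=> x' hx'; rewrite (herm_cw _ hx') mulr_sumr raddf_sum; apply: eq_bigr => s _.
  rewrite mulrCA; exact: (ReMl (pam_real (hx' s))).
have hlama : lambda * a = N by rewrite hlam divfK.
have hNr : N \is Num.real := gtr0_real hN.
have hcore : forall x', codeword M x' -> (\sum_s x' s * r s) ^+ 2 <= N * sqnorm x'.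
  move=> x' hx'; rewrite -hRe //.
  set b := herm_ip x' y.
  have hN' := sqnorm_gt0 hT hx'.
  have hm := hmax _ hx'; rewrite /glrt_metric -/a -/b -/N in hm.
  apply: (@le_trans _ _ (`|lambda * b| ^+ 2)).
    rewrite normC2_Re_Im lerDl -real_normK ?Creal_Im //; exact: exprn_ge0 (normr_ge0 _).
  rewrite normrM exprMn.
  rewrite ler_pdivrMr // in hm.
  apply: (@le_trans _ _ (`|lambda| ^+ 2 * (`|a| ^+ 2 / N * sqnorm x'))).
    by rewrite ler_wpM2l // exprn_ge0.
  have nz : N != 0 by rewrite gt_eqF.
  have -> : `|lambda|^+2 * (`|a|^+2 / N * sqnorm x') = (`|lambda * a|^+2 / N) * sqnorm x' by rewrite normrM exprMn !mulrA.
  by rewrite hlama (ger0_norm (ltW hN)) expr2 mulfK.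
have h1 : N = \sum_s xopt s * r s.
  by rewrite -hRe // -/a hlama (Creal_ReP _ hNr).
have h2 := sqnorm_cw hxopt; rewrite -/N in h2.
have hA : \sum_s xopt s * (r s - xopt s) = 0.
  rewrite (eq_bigr (fun s => xopt s * r s - xopt s ^+ 2)); last first.
    by move=> s _; rewrite mulrBr expr2.
  by rewrite sumrB -h1 -h2 subrr.
have hB : HB M xopt r.
  move=> s d hd hp.
  pose x' := fun u => if u == s then xopt s + d else xopt u.
  have hx' : codeword M x'.
    move=> u; rewrite /x' /=; case: ifP => _; [exact: hp | exact: hxopt].
  have hc := hcore x' hx'.
  have E1 : \sum_u x' u * r u = N + d * r s.
    rewrite h1 (bigD1 s) //= [in RHS](bigD1 s) //= /x' eqxx mulrDl addrAC.
    by congr (_ + _ + _); apply: eq_bigr => u /negbTE ->.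
  have E2 : sqnorm x' = N + ((xopt s + d) ^+ 2 - xopt s ^+ 2).
    rewrite (sqnorm_cw hx') h2 (bigD1 s) //= [in RHS](bigD1 s) //= /x' eqxx.
    rewrite (eq_bigr (fun i => xopt i ^+ 2)); last by move=> u /negbTE ->.
    by rewrite addrAC subrKC.
  apply: (alg hN); last by rewrite -E1 -E2.
    by case: hd => ->; rewrite ?sqrrN -natrX.
  have hdr : d * r s \is Num.real.
    by rewrite realM ?Creal_Re //; case: hd => ->; rewrite ?rpredN realn.
  by rewrite -real_normK // exprn_ge0.
exact: key hM hMeven hT hxopt hB hA.
Qed.
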